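(* There exist constants $\varepsilon>0$ and $C>0$ such that for all positive integers $n$ and all integers $k$ with $\frac{n}{16}\le k\le\frac{n}{4}$, $g_k(n)\le C(2-\varepsilon)^n$.
   Context: $[n]_0=\{0,1,\dots,n\}$, $S_1+S_2=\{u+v:u\in S_1,v\in S_2\}$. For such $k$, $g_k(n)$ is the sum of $2^{-|(S_1+S_2)\cap[n]_0|}$ over all pairs $S_1,S_2\subseteq[n]_0$ with $0\in S_1\cap S_2$, $n+1\notin S_1+S_2$ and $n+1-k\notin S_1+S_2$. *)

(* Defs.v *)
From HB Require Import structures.
From mathcomp Require Import all_boot all_order all_algebra.
From mathcomp Require Import reals.
Set Implicit Arguments. Unset Strict Implicit. Unset Printing Implicit Defensive.
Import Order.TTheory GRing.Theory Num.Theory.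

(* Subsets of [n]_0 = {0,...,n} are represented as {set 'I_n.+1}. *)

Definition in_sumset (n : nat) (S1 S2 : {set 'I_n.+1}) (m : nat) : bool :=
  [exists u in S1, exists v in S2, (val u + val v == m)%N].

Definition sumset_card (n : nat) (S1 S2 : {set 'I_n.+1}) : nat :=
  #|[set m : 'I_n.+1 | in_sumset S1 S2 (val m)]|.

Local Open Scope ring_scope.

Definition g (R : realType) (k n : nat) : R :=
  \sum_(S1 : {set 'I_n.+1})
   \sum_(S2 : {set 'I_n.+1} |
          [&& (ord0 \in S1), (ord0 \in S2),
              ~~ in_sumset S1 S2 n.+1 &
              ~~ in_sumset S1 S2 (n.+1 - k)%N])
     (2%:R^-1) ^+ sumset_card S1 S2.

(* Main.v *)
Require Import Defs.
From HB Require Import structures.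
From mathcomp Require Import all_boot all_order all_algebra.
From mathcomp Require Import reals.
From mathcomp Require Import ring lra zify.
Import Order.TTheory GRing.Theory Num.Theory.
Set Implicit Arguments. Unset Strict Implicit. Unset Printing Implicit Defensive.

(* Proof idea: bound 2^-|S1+S2| by 2^-|S1 u S2|, split the
   positions into "ladders" (residue classes mod k paired by x -> n+1-x), use
   independence of coordinates and a transfer-matrix bound on each ladder. *)


Lemma uniq_flatten_lab (T L : eqType) (f : T -> L) (g : L -> seq T) (s : seq L) :
  uniq s -> (forall l, l \in s -> uniq (g l)) ->
  (forall l x, l \in s -> x \in g l -> f x = l) -> uniq (flatten (map g s)).
Proof.
elim: s => [|l s IH] //= /andP[ls Us] hu hf.
rewrite cat_uniq hu ?mem_head //= IH //; last first.
- by move=> l' x l's xg; apply: hf => //; rewrite inE l's orbT.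
- by move=> l' l's; apply: hu; rewrite inE l's orbT.
rewrite andbT; apply/hasP => -[x /flattenP[y /mapP[l' l's ->] xg'] xg].
have e1 : f x = l by apply: hf => //; rewrite mem_head.
have e2 : f x = l' by apply: hf => //; rewrite inE l's orbT.
by move: ls; rewrite -e1 e2 l's.
Qed.

Section NT.
Variables (n k : nat).
Hypotheses (hn : 0 < n) (h16 : n <= 16 * k) (h4 : 4 * k <= n).

Definition mm := n.-1.
Definition pr (r : nat) := (mm - r) %% k.
Definition jj (r : nat) := (mm - r) %/ k + 1.
Definition ty r i := r + i * k.
Definition sy r i := mm - (r + i * k).
Definition ladY r := flatten [seq [:: ty r i; sy r i] | i <- iota 0 (jj r)].
Definition canl := [seq r <- iota 0 k | r < pr r].

Lemma k_gt0 : 0 < k.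
Proof. by case: k h16 hn => // ; rewrite muln0 leqn0 => /eqP ->. Qed.

Lemma mmE : mm.+1 = n.
Proof. by rewrite /mm prednK. Qed.

Lemma ltk_le r : r < k -> 3 * k <= mm - r.
Proof. move=> rk; rewrite /mm; lia. Qed.

Lemma jj_ge4 r : r < k -> 4 <= jj r.
Proof.
move=> rk; rewrite /jj addn1 ltnS leq_divRL ?k_gt0 //.
exact: ltk_le.
Qed.

Lemma jj_le16 r : jj r <= 16.
Proof.
rewrite /jj addn1 ltnS -ltnS ltn_divLR ?k_gt0 //.
rewrite /mm; lia.
Qed.

Lemma ty_le r i : r < k -> i < jj r -> ty r i <= mm.
Proof.
move=> rk; rewrite /jj /ty addn1 ltnS => ile.
have : i * k <= (mm - r) %/ k * k by rewrite leq_mul2r ile orbT.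
have := leq_divM (mm - r) k; have := ltk_le rk; lia.
Qed.

Lemma ty_mod r i : r < k -> ty r i %% k = r.
Proof. by move=> rk; rewrite /ty addnC modnMDl modn_small. Qed.

Lemma ty_div r i : r < k -> ty r i %/ k = i.
Proof. by move=> rk; rewrite /ty addnC divnMDl ?k_gt0 // divn_small // addn0. Qed.

Lemma sy_mod r i : r < k -> i < jj r -> sy r i %% k = pr r.
Proof.
move=> rk ij; have tl := ty_le rk ij; rewrite /pr /sy.
have -> : mm - r = i * k + (mm - (r + i * k)) by move: tl; rewrite /ty; lia.
by rewrite modnMDl.
Qed.

Lemma pr_lt r : pr r < k.
Proof. by rewrite /pr ltn_mod k_gt0. Qed.

Lemma prK r : r < k -> pr (pr r) = r.
Proof.
move=> rk; rewrite /pr.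
have e := divn_eq (mm - r) k.
have rm : r <= mm by have := ltk_le rk; lia.
have -> : mm - (mm - r) %% k = (mm - r) %/ k * k + r.
  move: e (ltn_pmod (mm - r) k_gt0).
  move: ((mm - r) %/ k * k) ((mm - r) %% k) => a b; lia.
by rewrite modnMDl modn_small.
Qed.


Lemma canlP r : r \in canl -> r < k /\ r < pr r.
Proof. by rewrite mem_filter mem_iota add0n => /andP[-> /andP[_ ->]]. Qed.

Definition lab y := minn (y %% k) (pr (y %% k)).

Lemma modmm y : y <= mm -> (mm - y) %% k = pr (y %% k).
Proof.
move=> ym; rewrite /pr.
have e := divn_eq y k.
have -> : mm - y %% k = y %/ k * k + (mm - y).
  move: e; move: (y %/ k * k) (y %% k) => a b; lia.
by rewrite modnMDl.
Qed.

Lemma ladYP r x : x \in ladY r -> exists2 i, i < jj r & (x = ty r i \/ x = sy r i).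
Proof.
case/flattenP => l /mapP[i]; rewrite mem_iota add0n => /andP[_ ij] -> xl.
by exists i => //; move: xl; rewrite !inE => /orP[] /eqP ->; [left | right].
Qed.

Lemma lab_ladY r x : r \in canl -> x \in ladY r -> lab x = r.
Proof.
case/canlP => rk rpr /ladYP[i ij [->|->]]; rewrite /lab.
  by rewrite ty_mod //; apply/minn_idPl/ltnW.
by rewrite sy_mod // prK //; apply/minn_idPr/ltnW.
Qed.

Lemma ladY_uniq r : r \in canl -> uniq (ladY r).
Proof.
case/canlP => rk rpr.
apply: (uniq_flatten_lab (f := fun y => if y %% k == r then y %/ k else (mm - y) %/ k)).
- exact: iota_uniq.
- move=> i; rewrite mem_iota add0n => /andP[_ ij] /=; rewrite andbT inE.
  by apply/eqP => e; have := congr1 (fun y => y %% k) e; rewrite /= ty_mod // sy_mod // => h; move: rpr; rewrite {1}h ltnn.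
- move=> i x; rewrite mem_iota add0n => /andP[_ ij]; rewrite !inE => /orP[] /eqP ->.
    by rewrite ty_mod // eqxx ty_div.
  rewrite sy_mod // (gtn_eqF rpr) /sy.
  have tl := ty_le rk ij; rewrite /ty in tl.
  by rewrite (_ : mm - (mm - (r + i * k)) = ty r i) ?ty_div //; rewrite /ty; lia.
Qed.

Lemma all_uniq : uniq (flatten (map ladY canl)).
Proof.
apply: (uniq_flatten_lab (f := lab)).
- by apply: filter_uniq; exact: iota_uniq.
- exact: ladY_uniq.
- by move=> l x; apply: lab_ladY.
Qed.

Lemma ladY_le r x : r \in canl -> x \in ladY r -> x <= mm.
Proof.
case/canlP => rk _ /ladYP[i ij [->|->]]; first exact: ty_le.
by rewrite /sy leq_subr.
Qed.

Lemma all_le x : x \in flatten (map ladY canl) -> x <= mm.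
Proof. by case/flattenP => l /mapP[r rc ->]; apply: ladY_le. Qed.

Definition spec y := y %% k == pr (y %% k).

Lemma cover y : y < n -> ~~ spec y -> y \in flatten (map ladY canl).
Proof.
move=> yn ns; have ym : y <= mm by rewrite /mm; lia.
have rk : y %% k < k by rewrite ltn_mod k_gt0.
have e := divn_eq y k.
case: (ltngtP (y %% k) (pr (y %% k))) => [lt|gt|eq]; last by case/negP: ns; apply/eqP.
- apply/flattenP; exists (ladY (y %% k)); first by apply/mapP; exists (y %% k) => //; rewrite mem_filter lt mem_iota.
  apply/flattenP; exists [:: ty (y %% k) (y %/ k); sy (y %% k) (y %/ k)]; last by rewrite /ty addnC -e mem_head.
  apply/mapP; exists (y %/ k) => //; rewrite mem_iota add0n leq0n /= /jj addn1 ltnS leq_divRL ?k_gt0 //.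
  by move: e ym; move: (y %/ k * k) (y %% k) => a b; lia.
- set q := pr (y %% k).
  have qk : q < k by exact: pr_lt.
  have qq : pr q = y %% k by rewrite /q prK.
  have e2 := divn_eq (mm - y) k.
  rewrite modmm // -/q in e2.
  apply/flattenP; exists (ladY q); first by apply/mapP; exists q => //; rewrite mem_filter qq gt mem_iota.
  apply/flattenP; exists [:: ty q ((mm - y) %/ k); sy q ((mm - y) %/ k)]; last first.
    rewrite /sy /ty addnC -e2.
    by rewrite subKn // !inE eqxx orbT.
  apply/mapP; exists ((mm - y) %/ k) => //; rewrite mem_iota add0n leq0n /= /jj addn1 ltnS leq_divRL ?k_gt0 //.
  clearbody q; move: e2; move: ((mm - y) %/ k * k) => a e2.
  lia.
Qed.

Lemma spec_mod y : y <= mm -> spec y -> (2 * y) %% k = mm %% k.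
Proof.
move=> ym /eqP sp.
have rk : y %% k <= mm by have := ltn_pmod y k_gt0; rewrite /mm; lia.
rewrite -modnMmr mul2n -addnn {2}sp /pr modnDmr.
by congr (_ %% _); lia.
Qed.

Lemma count_spec : count spec (iota 0 n) <= 32.
Proof.
set S := [seq y <- iota 0 n | spec y].
have szS : size S = count spec (iota 0 n) by rewrite size_filter.
have inS y : y \in S -> y <= mm /\ spec y.
  by rewrite mem_filter mem_iota add0n => /andP[sp yn]; split => //; rewrite /mm; lia.
rewrite -szS -(size_map (fun y => (2 * y) %/ k)).
have -> : 32 = size (iota 0 32) by rewrite size_iota.
apply: uniq_leq_size.
  rewrite map_inj_in_uniq ?filter_uniq ?iota_uniq //.
  move=> y1 y2 /inS[y1m s1] /inS[y2m s2] /= e.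
  have m1 := spec_mod y1m s1; have m2 := spec_mod y2m s2.
  wlog lt : y1 y2 y1m y2m s1 s2 e m1 m2 / y1 <= y2.
    move=> H; case: (leqP y1 y2) => [|/ltnW] h; first exact: H.
    by apply/esym/H.
  case: (ltngtP y1 y2) lt => // y12 _.
  have le12 : 2 * y1 <= 2 * y2 by rewrite leq_mul2l (ltnW y12) orbT.
  have dv : k %| 2 * y2 - 2 * y1 by rewrite -eqn_mod_dvd // m1 m2.
  have : k <= 2 * y2 - 2 * y1 by apply: dvdn_leq => //; rewrite subn_gt0 ltn_mul2l.
  move=> kl.
  have : (2 * y1) %/ k < (2 * y2) %/ k.
    apply: (@leq_trans (((2 * y1) + k) %/ k)); first by rewrite divnDr ?dvdnn // divnn k_gt0 addn1.
    by apply: leq_div2r; clear -kl le12; lia.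
  by rewrite e ltnn.
move=> z /mapP[y /inS[ym _] ->]; rewrite mem_iota add0n ltn_divLR ?k_gt0 //.
have yn : y < n by rewrite -mmE ltnS.
clear -yn h16; rewrite leq0n /=; lia.
Qed.

Lemma size_all : n - 32 <= size (flatten (map ladY canl)).
Proof.
set NS := [seq y <- iota 0 n | ~~ spec y].
have : size NS <= size (flatten (map ladY canl)).
  apply: uniq_leq_size; first by rewrite filter_uniq ?iota_uniq.
  by move=> y; rewrite mem_filter mem_iota add0n => /andP[ns yn]; apply: cover.
have c1 : size NS = count (predC spec) (iota 0 n) by rewrite size_filter.
have c2 := count_predC spec (iota 0 n); rewrite size_iota in c2.
have c3 := count_spec.
move: c1 c2 c3; move: (size NS) (count spec (iota 0 n)) (count (predC spec) (iota 0 n)) => a b c.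
lia.
Qed.

End NT.

Local Open Scope ring_scope.

Section Indep.
Variable R : realType.
Variable I : finType.
Definition cfg := ({set I} * {set I})%type.
Definition Ex (F : cfg -> R) : R := (\sum_(AB : cfg) F AB) / #|{: cfg}|%:R.
Definition dep (P : {set I}) (F : cfg -> R) :=
  forall AB AB' : cfg, AB.1 :&: P = AB'.1 :&: P -> AB.2 :&: P = AB'.2 :&: P -> F AB = F AB'.
Definition mrg (P X Y : {set I}) := (X :&: P) :|: (Y :\: P).

Lemma mrgK P X Y : mrg P (mrg P X Y) (mrg P Y X) = X.
Proof.
apply/setP=> x; rewrite /mrg !inE; by case: (x \in P); case: (x \in X); case: (x \in Y).
Qed.

Lemma mrgI P X Y : mrg P X Y :&: P = X :&: P.
Proof. by apply/setP=> x; rewrite /mrg !inE; case: (x \in P); case: (x \in X); case: (x \in Y). Qed.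

Lemma mrgC P X Y : mrg P X Y :&: ~: P = Y :&: ~: P.
Proof. by apply/setP=> x; rewrite /mrg !inE; case: (x \in P); case: (x \in X); case: (x \in Y). Qed.

Lemma card_cfg_gt0 : (0 < #|{: cfg}|)%N.
Proof. by apply/card_gt0P; exists (set0, set0). Qed.

Lemma indep (P : {set I}) (F G : cfg -> R) : dep P F -> dep (~: P) G ->
  Ex (fun AB => F AB * G AB) = Ex F * Ex G.
Proof.
move=> dF dG.
pose M : R := #|{: cfg}|%:R.
have M0 : M != 0 by rewrite pnatr_eq0 -lt0n card_cfg_gt0.
pose Phi (q : cfg * cfg) : cfg * cfg :=
  ((mrg P q.1.1 q.2.1, mrg P q.1.2 q.2.2), (mrg P q.2.1 q.1.1, mrg P q.2.2 q.1.2)).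
have PhiK : involutive Phi by case=> [[a b] [c d]]; rewrite /Phi /= !mrgK.
have key : (\sum_AB F AB) * (\sum_AB G AB) = M * \sum_AB (F AB * G AB).
  rewrite big_distrl /=.
  under eq_bigr do rewrite big_distrr /=.
  rewrite pair_bigA /=.
  rewrite (reindex_inj (inv_inj PhiK)) /=.
  have -> : \sum_(q : cfg * cfg) F (Phi q).1 * G (Phi q).2 =
            \sum_(q : cfg * cfg) (F q.1 * G q.1).
    apply: eq_bigr => [[[a b] [c d]]] _ /=.
    by congr (_ * _); [apply: dF | apply: dG]; rewrite /= ?mrgI ?mrgC.
  rewrite -(pair_bigA _ (fun a (_ : cfg) => F a * G a)) /=.
  under eq_bigr do rewrite sumr_const.
  by rewrite sumrMnl -mulr_natl.
rewrite /Ex -/M mulrACA key.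
by field.
Qed.

Lemma eq_Ex (F G : cfg -> R) : (forall AB, F AB = G AB) -> Ex F = Ex G.
Proof. by move=> h; rewrite /Ex; congr (_ / _); apply: eq_bigr => AB _. Qed.

Lemma ExD (F G : cfg -> R) : Ex (fun AB => F AB + G AB) = Ex F + Ex G.
Proof. by rewrite /Ex big_split /= mulrDl. Qed.

Lemma ExZ (a : R) (F : cfg -> R) : Ex (fun AB => a * F AB) = a * Ex F.
Proof. by rewrite /Ex -big_distrr /= mulrA. Qed.

Lemma Ex_sum (J : finType) (F : J -> cfg -> R) :
  Ex (fun AB => \sum_(j : J) F j AB) = \sum_(j : J) Ex (F j).
Proof. by rewrite /Ex exchange_big /= big_distrl. Qed.

Lemma Ex_le (F G : cfg -> R) : (forall AB, F AB <= G AB) -> Ex F <= Ex G.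
Proof.
move=> h; rewrite /Ex ler_pM2r ?invr_gt0 ?ltr0n ?card_cfg_gt0 //.
by apply: ler_sum => AB _.
Qed.

Lemma Ex_ge0 (F : cfg -> R) : (forall AB, 0 <= F AB) -> 0 <= Ex F.
Proof.
move=> h; rewrite /Ex mulr_ge0 ?invr_ge0 ?ler0n //.
by apply: sumr_ge0 => AB _.
Qed.

Lemma Ex_cst (c : R) : Ex (fun _ => c) = c.
Proof.
have h : (#|{: cfg}|%:R : R) != 0 by rewrite pnatr_eq0 -lt0n card_cfg_gt0.
by rewrite /Ex sumr_const -mulr_natl; field.
Qed.

Lemma depP (P : {set I}) (F : cfg -> R) :
  (forall AB AB' : cfg, {in P, forall x, (x \in AB.1) = (x \in AB'.1)} ->
     {in P, forall x, (x \in AB.2) = (x \in AB'.2)} -> F AB = F AB') -> dep P F.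
Proof.
move=> h AB AB' e1 e2; apply: h => x xP.
  by move/setP: e1 => /(_ x); rewrite !inE xP !andbT.
by move/setP: e2 => /(_ x); rewrite !inE xP !andbT.
Qed.

Lemma depM (P : {set I}) (F G : cfg -> R) : dep P F -> dep P G -> dep P (fun AB => F AB * G AB).
Proof. by move=> dF dG AB AB' e1 e2; rewrite (dF AB AB') ?(dG AB AB'). Qed.

Lemma dep_sub (P Q : {set I}) (F : cfg -> R) : P \subset Q -> dep P F -> dep Q F.
Proof.
move=> sPQ dF AB AB' e1 e2; apply: dF.
  by rewrite -(setIidPr sPQ) !setIA e1.
by rewrite -(setIidPr sPQ) !setIA e2.
Qed.

Definition tog (x : I) (A : {set I}) := (A :\ x) :|: ([set x] :\: A).

Lemma togK x : involutive (tog x).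
Proof.
move=> A; apply/setP=> y; rewrite /tog !inE.
by case: (y == x); case: (y \in A).
Qed.

Lemma in_tog x A : (x \in tog x A) = ~~ (x \in A).
Proof. by rewrite /tog !inE eqxx /=; case: (x \in A). Qed.

Lemma sum_mem x (b : bool) :
  \sum_(A : {set I}) ((x \in A) == b)%:R = (#|{: {set I}}|%:R / 2 : R).
Proof.
have e : \sum_(A : {set I}) ((x \in A) == b)%:R =
         \sum_(A : {set I}) ((x \in A) == ~~ b)%:R :> R.
  rewrite (reindex_inj (inv_inj (togK x))) /=.
  by apply: eq_bigr => A _; rewrite in_tog; case: b; case: (x \in A).
have tot : \sum_(A : {set I}) ((x \in A) == b)%:R +
           \sum_(A : {set I}) ((x \in A) == ~~ b)%:R = #|{: {set I}}|%:R :> R.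
  rewrite -big_split /= -sumr_const.
  by apply: eq_bigr => A _; case: (b); case: (x \in A); rewrite /= ?addr0 ?add0r.
rewrite -e in tot; rewrite -tot; lra.
Qed.

Lemma card_cfg : #|{: cfg}| = (#|{: {set I}}| * #|{: {set I}}|)%N.
Proof. by rewrite card_prod. Qed.

Lemma Ex_bit2 x (b1 b2 : bool) :
  Ex (fun AB => ((x \in AB.1) == b1)%:R * ((x \in AB.2) == b2)%:R) = 1 / 4.
Proof.
rewrite /Ex -(pair_bigA _ (fun (A B : {set I}) => ((x \in A) == b1)%:R * ((x \in B) == b2)%:R)) /=.
under eq_bigr do rewrite -big_distrr /= sum_mem.
rewrite -big_distrl /= sum_mem card_cfg natrM.
have h : (#|{: {set I}}|%:R : R) != 0.
  by rewrite pnatr_eq0 -lt0n; apply/card_gt0P; exists set0.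
by field.
Qed.

Lemma bits4 (h : bool -> bool -> bool -> bool -> R) x1 x2 x3 x4 :
  h x1 x2 x3 x4 = \sum_(b1 : bool) \sum_(b2 : bool) \sum_(b3 : bool) \sum_(b4 : bool)
     ((x1 == b1)%:R * (x2 == b2)%:R * (x3 == b3)%:R * (x4 == b4)%:R) * h b1 b2 b3 b4.
Proof.
rewrite !big_bool /=.
by case: x1; case: x2; case: x3; case: x4; rewrite /= ?(mulr1n, mulr0n, mul0r, mul1r, mulr0, mulr1, addr0, add0r).
Qed.

Lemma Ex_bits4 (t s : I) (h : bool -> bool -> bool -> bool -> R) : t != s ->
  Ex (fun AB => h (t \in AB.1) (t \in AB.2) (s \in AB.1) (s \in AB.2)) =
  1 / 16 * \sum_(b1 : bool) \sum_(b2 : bool) \sum_(b3 : bool) \sum_(b4 : bool) h b1 b2 b3 b4.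
Proof.
move=> ts.
rewrite (eq_Ex (fun AB => bits4 h _ _ _ _)).
rewrite Ex_sum big_distrr; apply: eq_bigr => b1 _.
rewrite Ex_sum big_distrr; apply: eq_bigr => b2 _.
rewrite Ex_sum big_distrr; apply: eq_bigr => b3 _.
rewrite Ex_sum big_distrr; apply: eq_bigr => b4 _.
rewrite (@eq_Ex _ (fun AB : cfg => h b1 b2 b3 b4 *
   ((((t \in AB.1) == b1)%:R * ((t \in AB.2) == b2)%:R) *
   (((s \in AB.1) == b3)%:R * ((s \in AB.2) == b4)%:R)))); last first.
  by move=> AB; rewrite mulrC !mulrA.
rewrite ExZ (@indep [set t]) ?Ex_bit2; first by rewrite mulrC; congr (_ * _); field.
  apply: depP => AB AB' e1 e2.
  by rewrite e1 ?e2 // inE.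
apply: depP => AB AB' e1 e2.
by rewrite e1 ?e2 // !inE eq_sym.
Qed.

End Indep.

Section Ladder.
Variable R : realType.
Variable I : finType.

Definition wt (b : bool) : R := if b then 1 / 2 else 1.

Definition phi (p : bool * bool) (a b c d : bool) : R :=
  if [&& ~~ (a && b), ~~ (c && d), ~~ (p.1 && b) & ~~ (c && p.2)]
  then wt (a || d) * wt (b || c) else 0.

Fixpoint LQ (p : bool * bool) (L : seq (I * I)) (AB : cfg I) : R :=
  match L with
  | [::] => 1
  | st :: L' => phi p (st.1 \in AB.1) (st.2 \in AB.2) (st.2 \in AB.1) (st.1 \in AB.2)
                * LQ (st.1 \in AB.1, st.1 \in AB.2) L' AB
  end.

Definition ladpos (L : seq (I * I)) : seq I := flatten [seq [:: st.1; st.2] | st <- L].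

Lemma phi_ge0 p a b c d : 0 <= phi p a b c d.
Proof. by rewrite /phi; case: ifP => // _; rewrite /wt; case: (a || d); case: (b || c); lra. Qed.

Lemma LQ_ge0 p L AB : 0 <= LQ p L AB.
Proof. by elim: L p => [|st L IH] p /=; rewrite ?ler01 // mulr_ge0 ?phi_ge0. Qed.

Lemma dep_LQ p L : dep [set x | x \in ladpos L] (LQ p L).
Proof.
elim: L p => [|[t s] L IH] p /=; first by move=> AB AB' _ _.
apply: depP => AB AB' e1 e2.
have tin : t \in [set x | x \in t :: s :: ladpos L] by rewrite inE mem_head.
have sin : s \in [set x | x \in t :: s :: ladpos L] by rewrite !inE eqxx orbT.
rewrite (e1 t) ?(e2 t) ?(e1 s) ?(e2 s) //.
congr (_ * _); apply: (IH _ AB AB').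
  apply/setP=> x; rewrite !inE; case xL: (x \in ladpos L); rewrite ?andbF ?andbT //.
  by rewrite e1 // !inE xL !orbT.
apply/setP=> x; rewrite !inE; case xL: (x \in ladpos L); rewrite ?andbF ?andbT //.
by rewrite e2 // !inE xL !orbT.
Qed.

Definition Tm (p c : bool * bool) : R :=
  \sum_(b1 : bool) \sum_(b2 : bool) \sum_(b3 : bool) \sum_(b4 : bool)
     phi p b1 b4 b3 b2 * ((b1, b2) == c)%:R.

Lemma LQ_step p t s L : uniq (ladpos ((t, s) :: L)) ->
  Ex (LQ p ((t, s) :: L)) = \sum_(c : bool * bool) Tm p c / 16 * Ex (LQ c L).
Proof.
rewrite /ladpos /= -/(ladpos L) => /andP[tn /andP[sn _]].
rewrite inE negb_or in tn; case/andP: tn => ts tL.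
have e : forall AB, LQ p ((t, s) :: L) AB = \sum_(c : bool * bool)
    (phi p (t \in AB.1) (s \in AB.2) (s \in AB.1) (t \in AB.2) *
     (((t \in AB.1), (t \in AB.2)) == c)%:R) * LQ c L AB.
  move=> AB /=.
  rewrite (bigD1 (t \in AB.1, t \in AB.2)) //= eqxx mulr1 big1 ?addr0 //.
  by move=> c; rewrite eq_sym => /negbTE ->; rewrite mulr0 mul0r.
rewrite (eq_Ex e) Ex_sum; apply: eq_bigr => c _.
rewrite (@indep _ _ [set t; s]).
  rewrite (Ex_bits4 (fun b1 b2 b3 b4 => phi p b1 b4 b3 b2 * ((b1, b2) == c)%:R)) //.
  by rewrite /Tm mul1r [_^-1 * _]mulrC.
  apply: depP => AB AB' e1 e2.
  by rewrite (e1 t) ?(e2 t) ?(e1 s) ?(e2 s) // !inE eqxx ?orbT.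
apply: (@dep_sub _ _ [set x | x \in ladpos L]); last exact: dep_LQ.
apply/subsetP => x; rewrite !inE => xL; rewrite negb_or.
by apply/andP; split; apply/eqP => ex; [rewrite -ex xL in tL | rewrite -ex xL in sn].
Qed.


Lemma sum_bb (F : bool * bool -> R) :
  \sum_(c : bool * bool) F c = F (false, false) + F (false, true) + F (true, false) + F (true, true).
Proof.
rewrite (eq_bigr (fun c => F (c.1, c.2))); last by case.
rewrite -(pair_bigA _ (fun c1 c2 => F (c1, c2))) /= !big_bool /=.
lra.
Qed.

Definition vec (a b c d : R) (x : bool * bool) : R :=
  match x with
  | (false, false) => a | (false, true) => b | (true, false) => c | (true, true) => d
  end.

Definition Ttab (p : bool * bool) : bool * bool -> R :=
  match p with
  | (false, false) => vec (5/2) (3/4) (3/4) (1/2)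
  | (false, true) => vec (3/2) (3/4) (1/2) (1/2)
  | (true, false) => vec (3/2) (1/2) (3/4) (1/2)
  | (true, true) => vec 1 (1/2) (1/2) (1/2)
  end.

Lemma Tm_val p c : Tm p c = Ttab p c.
Proof.
case: p => [[] []]; case: c => [[] []];
rewrite /Tm !big_bool /= /phi /wt /=; rewrite ?(mulr1n, mulr0n, mul0r, mul1r, mulr0, mulr1, addr0, add0r); lra.
Qed.

Definition Wv (j : nat) (c : bool * bool) : R :=
  match j with
  | 0 => 1
  | 1 => vec (9/2) (13/4) (13/4) (5/2) c
  | 2 => vec (139/8) (193/16) (193/16) 9 c
  | 3 => vec (2113/32) (2921/64) (2921/64) (543/16) c
  | j'.+4 => vec 251 174 174 129 c * 4 ^+ j'
  end.

Lemma Wv_ge0 j c : 0 <= Wv j c.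
Proof.
case: j => [|[|[|[|j]]]] /=; case: c => [[] []] /=; rewrite ?mulr_ge0 ?exprn_ge0 //; lra.
Qed.

Lemma Wv_step j p : \sum_(c : bool * bool) Ttab p c * Wv j c <= Wv j.+1 p.
Proof.
rewrite sum_bb.
case: j => [|[|[|[|j]]]]; case: p => [[] []] /=; try lra.
all: rewrite exprS; have h4 : 0 <= (4 : R) ^+ j by rewrite exprn_ge0.
all: nra.
Qed.

Definition Bnd j c := Wv j c / 16 ^+ j.

Lemma LQ_bound p L : uniq (ladpos L) -> Ex (LQ p L) <= Bnd (size L) p.
Proof.
elim: L p => [|[t s] L IH] p.
  move=> _; rewrite /Bnd /= expr0 divr1.
  by change (Ex (fun _ : cfg I => (1 : R)) <= 1); rewrite Ex_cst.
move=> U; rewrite LQ_step //.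
have UL : uniq (ladpos L).
  by move: U; rewrite /ladpos /= => /andP[_ /andP[_]].
apply: le_trans (_ : \sum_(c : bool * bool) Tm p c / 16 * Bnd (size L) c <= _).
  apply: ler_sum => c _; apply: ler_wpM2l; last exact: IH.
  rewrite Tm_val; case: p => [[] []]; case: c => [[] []] /=; lra.
rewrite /Bnd /=.
have e : \sum_(c : bool * bool) Tm p c / 16 * (Wv (size L) c / 16 ^+ size L) =
   (\sum_(c : bool * bool) Ttab p c * Wv (size L) c) / 16 ^+ (size L).+1.
  rewrite big_distrl /=; apply: eq_bigr => c _; rewrite Tm_val exprS.
  have h : (16 : R) ^+ size L != 0 by rewrite expf_neq0 // pnatr_eq0.
  by field.
rewrite e ler_pM2r ?invr_gt0 ?exprn_gt0 //; exact: Wv_step.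
Qed.


Fixpoint condL (p : bool * bool) (L : seq (I * I)) (AB : cfg I) : bool :=
  match L with
  | [::] => true
  | st :: L' =>
    let a := st.1 \in AB.1 in let b := st.2 \in AB.2 in
    let c := st.2 \in AB.1 in let d := st.1 \in AB.2 in
    [&& ~~ (a && b), ~~ (c && d), ~~ (p.1 && b), ~~ (c && p.2) & condL (a, d) L' AB]
  end.

Lemma LQ_prod p L AB : condL p L AB ->
  LQ p L AB = \prod_(x <- ladpos L) wt ((x \in AB.1) || (x \in AB.2)).
Proof.
elim: L p => [|[t s] L IH] p /=; first by rewrite /ladpos big_nil.
case/and5P => h1 h2 h3 h4 h5.
rewrite /ladpos /= -/(ladpos L) !big_cons (IH _ h5) /phi h1 h2 h3 h4 /=.
by rewrite mulrA (orbC (s \in AB.2)).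
Qed.

Lemma dep_prod (P : {set I}) (T : eqType) (F : T -> cfg I -> R) (r : seq T) :
  (forall x, x \in r -> dep P (F x)) -> dep P (fun AB => \prod_(x <- r) F x AB).
Proof.
move=> h AB AB' e1 e2; apply: eq_big_seq => x xr; exact: h.
Qed.



Lemma prod_le_list (w : I -> R) (l : seq I) : (forall x, 0 <= w x <= 1) -> uniq l ->
  \prod_(x : I) w x <= \prod_(x <- l) w x.
Proof.
move=> hw U; rewrite (big_uniq _ U) (bigID (fun x => x \in l)) /=.
apply: ler_piMr; first by apply: prodr_ge0 => x _; case/andP: (hw x).
by apply: prodr_ile1 => x _; exact: hw.
Qed.

Lemma Ex_prod_ladders p0 (Ls : seq (seq (I * I))) :
  uniq (flatten [seq ladpos L | L <- Ls]) ->
  Ex (fun AB => \prod_(L <- Ls) LQ p0 L AB) = \prod_(L <- Ls) Ex (LQ p0 L).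
Proof.
elim: Ls => [|L Ls IH] /=.
  move=> _; rewrite big_nil.
  by rewrite (@eq_Ex _ _ _ (fun _ => 1)) ?Ex_cst // => AB; rewrite big_nil.
rewrite cat_uniq => /and3P[U1 D U2].
rewrite big_cons -IH //.
rewrite (@eq_Ex _ _ _ (fun AB => LQ p0 L AB * \prod_(L' <- Ls) LQ p0 L' AB)); last first.
  by move=> AB; rewrite big_cons.
apply: (@indep _ _ [set x | x \in ladpos L]); first exact: dep_LQ.
apply: dep_prod => L' L'in.
apply: (@dep_sub _ _ [set x | x \in ladpos L']); last exact: dep_LQ.
apply/subsetP => x; rewrite !inE => xL'.
apply: contraNN D => xL; apply/hasP; exists x => //.
by apply/flattenP; exists (ladpos L') => //; apply/mapP; exists L'.
Qed.



End Ladder.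

Section Main.
Variable R : realType.
Variables (n k : nat).
Hypotheses (hn : (0 < n)%N) (h16 : (n <= 16 * k)%N) (h4 : (4 * k <= n)%N).

Definition posY (y : nat) : 'I_n.+1 := inord y.+1.

Lemma posY_val y : (y <= mm n)%N -> nat_of_ord (posY y) = y.+1.
Proof. by move=> ym; rewrite /posY inordK // ltnS -(mmE hn). Qed.

Definition lad r : seq ('I_n.+1 * 'I_n.+1) :=
  [seq (posY (ty k r i), posY (sy n k r i)) | i <- iota 0 (jj n k r)].

Definition Ls := [seq lad r | r <- canl n k].

Lemma ladpos_lad r : ladpos (lad r) = map posY (ladY n k r).
Proof. by rewrite /ladpos /lad /ladY map_flatten -!map_comp. Qed.

Lemma flat_Ls : flatten [seq ladpos L | L <- Ls] = map posY (flatten (map (ladY n k) (canl n k))).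
Proof.
rewrite /Ls -map_comp (@eq_map _ _ _ (fun r => map posY (ladY n k r))); last first.
  by move=> r /=; rewrite ladpos_lad.
by rewrite map_flatten -map_comp.
Qed.

Lemma uniq_Ls : uniq (flatten [seq ladpos L | L <- Ls]).
Proof.
rewrite flat_Ls map_inj_in_uniq ?(all_uniq hn h16 h4) //.
move=> y1 y2 /(all_le hn h16 h4) y1m /(all_le hn h16 h4) y2m e.
by have := congr1 (@nat_of_ord _) e; rewrite !posY_val // => -[].
Qed.

Lemma size_Ls : (n - 32 <= size (flatten [seq ladpos L | L <- Ls]))%N.
Proof. by rewrite flat_Ls size_map; apply: (size_all hn h16 h4). Qed.


Lemma in_sumsetI (S1 S2 : {set 'I_n.+1}) (u v : 'I_n.+1) N :
  u \in S1 -> v \in S2 -> (nat_of_ord u + nat_of_ord v)%N = N -> in_sumset S1 S2 N.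
Proof.
move=> uS vS e; apply/existsP; exists u; rewrite uS /=.
by apply/existsP; exists v; rewrite vS /= e eqxx.
Qed.

Definition ladI r i0 len : seq ('I_n.+1 * 'I_n.+1) :=
  [seq (posY (ty k r i), posY (sy n k r i)) | i <- iota i0 len].

Lemma condI r (AB : cfg 'I_n.+1) : r \in canl n k ->
  ~~ in_sumset AB.1 AB.2 n.+1 -> ~~ in_sumset AB.1 AB.2 (n.+1 - k) ->
  forall len i0 p, (i0 + len <= jj n k r)%N ->
  (match i0 with 0 => p = (false, false)
   | i.+1 => p = (posY (ty k r i) \in AB.1, posY (ty k r i) \in AB.2) end) ->
  condL p (ladI r i0 len) AB.
Proof.
move=> /canlP [rk _] ns1 ns2.
have mmn := mmE hn.
elim=> [|len IH] i0 p hl hp //=.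
have ij : (i0 < jj n k r)%N by rewrite -addn1 (leq_trans _ hl) // leq_add2l.
have tl := ty_le hn h16 h4 rk ij.
have sl : (sy n k r i0 <= mm n)%N by rewrite /sy leq_subr.
have ts : (ty k r i0 + sy n k r i0)%N = mm n by rewrite /sy /ty subnKC.
apply/and5P; split.
- apply/negP => /andP[a b]; case/negP: ns1; apply: (in_sumsetI a b).
  by rewrite !posY_val //; move: ts mmn; move: (ty k r i0) (sy n k r i0) (mm n) => x y z; lia.
- apply/negP => /andP[a b]; case/negP: ns1; apply: (in_sumsetI a b).
  by rewrite !posY_val //; move: ts mmn; move: (ty k r i0) (sy n k r i0) (mm n) => x y z; lia.
- case: i0 ij tl sl ts hl hp IH => [|i] ij tl sl ts hl hp IH; first by rewrite hp.
  rewrite hp /=; apply/negP => /andP[a b]; case/negP: ns2; apply: (in_sumsetI a b).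
  have til : (ty k r i <= mm n)%N by apply: leq_trans tl; rewrite /ty leq_add2l leq_mul2r leqnSn orbT.
  rewrite !posY_val //.
  move: ts mmn tl; rewrite /sy /ty mulSnr.
  rewrite !addnA; move: (r + i * k)%N (mm n) => x z; lia.
- case: i0 ij tl sl ts hl hp IH => [|i] ij tl sl ts hl hp IH; first by rewrite hp andbF.
  rewrite hp /=; apply/negP => /andP[a b]; case/negP: ns2; apply: (in_sumsetI a b).
  have til : (ty k r i <= mm n)%N by apply: leq_trans tl; rewrite /ty leq_add2l leq_mul2r leqnSn orbT.
  rewrite !posY_val //.
  move: ts mmn tl; rewrite /sy /ty mulSnr.
  rewrite !addnA; move: (r + i * k)%N (mm n) => x z; lia.
- by apply: IH => //; rewrite addSnnS.
Qed.


Lemma LQ_lad r (AB : cfg 'I_n.+1) : r \in canl n k ->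
  ~~ in_sumset AB.1 AB.2 n.+1 -> ~~ in_sumset AB.1 AB.2 (n.+1 - k) ->
  LQ R (false, false) (lad r) AB =
  \prod_(x <- ladpos (lad r)) wt R ((x \in AB.1) || (x \in AB.2)).
Proof.
move=> rc ns1 ns2; apply: LQ_prod.
by apply: (condI rc ns1 ns2) => //; rewrite add0n.
Qed.

Lemma weight_le (AB : cfg 'I_n.+1) : ord0 \in AB.1 -> ord0 \in AB.2 ->
  ~~ in_sumset AB.1 AB.2 n.+1 -> ~~ in_sumset AB.1 AB.2 (n.+1 - k) ->
  (2^-1 : R) ^+ sumset_card AB.1 AB.2 <= \prod_(L <- Ls) LQ R (false, false) L AB.
Proof.
move=> o1 o2 ns1 ns2.
have sc : (#|AB.1 :|: AB.2| <= sumset_card AB.1 AB.2)%N.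
  rewrite /sumset_card; apply: subset_leq_card; apply/subsetP => x; rewrite !inE => /orP[] xin.
    by apply: (in_sumsetI xin o2); rewrite addn0.
  by apply: (in_sumsetI o1 xin); rewrite add0n.
apply: le_trans (_ : (2^-1 : R) ^+ #|AB.1 :|: AB.2| <= _).
  by apply: ler_wiXn2l => //; rewrite ?invr_ge0 ?ler0n // invf_le1 // ?ler1n ?ltr0n.
have e1 : (2^-1 : R) ^+ #|AB.1 :|: AB.2| =
    \prod_(x : 'I_n.+1) wt R ((x \in AB.1) || (x \in AB.2)).
  rewrite -prodr_const big_mkcond /=; apply: eq_bigr => x _.
  by rewrite /wt !inE; case: (_ || _) => //; rewrite mul1r.
rewrite e1.
apply: le_trans (prod_le_list _ uniq_Ls) _.
  by move=> x; rewrite /wt; case: (_ || _); lra.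
rewrite big_flatten big_map /=.
rewrite [X in _ <= X](eq_big_seq (fun L => \prod_(x <- ladpos L) wt R ((x \in AB.1) || (x \in AB.2)))) //.
by move=> L /mapP[r rc ->]; rewrite LQ_lad.
Qed.

End Main.

Section Final.
Variable R : realType.

Lemma bernoulli (d : R) m : 0 <= d <= 1 -> 1 - m%:R * d <= (1 - d) ^+ m.
Proof.
case/andP => d0 d1; elim: m => [|m IH]; first by rewrite expr0 mul0r subr0.
rewrite exprS -natr1.
have h0 : 0 <= 1 - d by lra.
have : (1 - d) * (1 - m%:R * d) <= (1 - d) * (1 - d) ^+ m by apply: ler_wpM2l.
have : 0 <= m%:R * d * d by rewrite !mulr_ge0 ?ler0n.
nra.
Qed.

Definition eta : R := 3999 / 4000.
Definition rho : R := 3999 / 8000.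

Lemma eta_pow j : (j <= 32)%N -> 251 / 256 <= eta ^+ j.
Proof.
move=> j32.
have e : eta = 1 - 1 / 4000 by rewrite /eta; field.
apply: le_trans (_ : eta ^+ 32 <= _); last first.
  by apply: ler_wiXn2l => //; rewrite /eta; lra.
rewrite e; apply: le_trans (bernoulli 32 _); last by lra.
lra.
Qed.

Lemma Bnd_le j : (4 <= j <= 16)%N -> Bnd R j (false, false) <= rho ^+ (j.*2).
Proof.
case/andP; case: j => [|[|[|[|j]]]] //= _ j16.
set X : R := 4 ^+ j.
have X0 : 0 < X by rewrite exprn_gt0.
have hZ : (16 : R) ^+ j.+4 = 256 * X * 4 ^+ j.+4.
  rewrite (_ : (16 : R) = 4 * 4); last by lra.
  rewrite exprMn /X.
  rewrite (_ : j.+4 = (j + 4)%N) ?exprD; last by rewrite addn4.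
  rewrite (_ : (4 : R) ^+ 4 = 256); last by rewrite !exprS expr0; lra.
  ring.
have hR : rho ^+ (j.+4).*2 = eta ^+ (j.+4).*2 / 4 ^+ j.+4.
  rewrite (_ : rho = eta / 2); last by rewrite /rho /eta; field.
  rewrite expr_div_n -mul2n !exprM.
  have -> : (2 : R) ^+ 2 = 4 by rewrite expr2; lra.
  by [].
rewrite hR /Bnd /= hZ.
set Z : R := 4 ^+ j.+4.
have Z0 : 0 < Z by rewrite exprn_gt0.
have E := eta_pow (j := (j.+4).*2); rewrite -/X.
have -> : 251 * X / (256 * X * Z) = (251 / 256) / Z.
  field; apply/andP; split; lra.
rewrite ler_pM2r ?invr_gt0 //; apply: E.
by rewrite -mul2n; lia.
Qed.


Lemma uniq_flatten_in (T : eqType) (ss : seq (seq T)) s :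
  uniq (flatten ss) -> s \in ss -> uniq s.
Proof.
elim: ss => [|s' ss IH] //= U; rewrite inE => /orP[/eqP ->|sin].
  by move: U; rewrite cat_uniq => /andP[].
by apply: IH => //; move: U; rewrite cat_uniq => /and3P[].
Qed.

Lemma size_ladpos (I : finType) (L : seq (I * I)) : size (ladpos L) = (size L).*2.
Proof. by elim: L => [|st L IH] //=; rewrite /ladpos /= -/(ladpos L) IH doubleS. Qed.

Lemma prod_rho (I : finType) (Ls : seq (seq (I * I))) :
  \prod_(L <- Ls) rho ^+ (size (ladpos L)) = rho ^+ size (flatten [seq ladpos L | L <- Ls]).
Proof.
elim: Ls => [|L Ls IH] /=; first by rewrite big_nil expr0.
by rewrite big_cons IH size_cat exprD.
Qed.

Lemma card_cfgI n : #|{: cfg 'I_n.+1}| = (2 ^ n.+1 * 2 ^ n.+1)%N.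
Proof.
rewrite card_cfg (_ : #|{: {set 'I_n.+1}}| = 2 ^ n.+1)%N //.
by rewrite -cardsT -powersetT card_powerset cardsT card_ord.
Qed.

Lemma final_num n : ((2 ^ n.+1 * 2 ^ n.+1)%:R : R) * rho ^+ (n - 32) <= 2 ^+ 70 * (3999 / 2000) ^+ n.
Proof.
set a := (n - 32)%N.
have an : (a <= n)%N by rewrite /a leq_subr.
have na : (n - a <= 32)%N by rewrite /a; lia.
set x : R := 3999 / 2000.
have x1 : 1 <= x by rewrite /x; lra.
have e4 : ((2 ^ n.+1 * 2 ^ n.+1)%:R : R) * rho ^+ a = 4 * 4 ^+ (n - a) * x ^+ a.
  rewrite natrM natrX -exprMn (_ : (2%:R * 2%:R : R) = 4); last by lra.
  rewrite exprS -{1}(subnK an) exprD -!mulrA; congr (_ * (_ * _)).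
  by rewrite -exprMn /x /rho; congr (_ ^+ _); lra.
rewrite e4.
have h1 : (4 : R) ^+ (n - a) <= 4 ^+ 32 by apply: ler_weXn2l => //; lra.
have h2 : x ^+ a <= x ^+ n by apply: ler_weXn2l.
have h3 : (4 : R) * 4 ^+ 32 <= 2 ^+ 70.
  rewrite -exprS (_ : (4 : R) = 2 ^+ 2); last by rewrite expr2; lra.
  rewrite -exprM; apply: ler_weXn2l => //; lra.
have p1 : 0 <= (4 : R) ^+ (n - a) by rewrite exprn_ge0.
have p2 : 0 <= x ^+ a by rewrite exprn_ge0 //; lra.
have p3 : 0 <= (4 : R) ^+ 32 by rewrite exprn_ge0.
have p4 : 0 <= x ^+ n by rewrite exprn_ge0 //; lra.
nra.
Qed.



Lemma g_bound n k : (0 < n)%N -> (n <= 16 * k)%N -> (4 * k <= n)%N ->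
  g R k n <= 2 ^+ 70 * (3999 / 2000) ^+ n.
Proof.
move=> hn h16 h4.
pose F := fun AB : cfg 'I_n.+1 => \prod_(L <- Ls n k) LQ R (false, false) L AB.
have Fge0 AB : 0 <= F AB by apply: prodr_ge0 => L _; exact: LQ_ge0.
have s1 : g R k n <= \sum_(AB : cfg 'I_n.+1) F AB.
  apply: le_trans (_ : _ <= \sum_(S1 : {set 'I_n.+1}) \sum_(S2 : {set 'I_n.+1}) F (S1, S2)) _.
    rewrite /g; apply: ler_sum => S1 _; rewrite big_mkcond /=; apply: ler_sum => S2 _.
    case: ifP => [/and4P[o1 o2 a b]|_]; last exact: Fge0.
    exact: (weight_le R hn h16 h4 (AB := (S1, S2))).
  rewrite (pair_bigA _ (fun S1 S2 => F (S1, S2))) /=.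
  by rewrite le_eqVlt; apply/orP; left; apply/eqP/eq_bigr => -[S1 S2].
have cf : (#|{: cfg 'I_n.+1}|%:R : R) != 0 by rewrite pnatr_eq0 -lt0n card_cfg_gt0.
have s2 : \sum_(AB : cfg 'I_n.+1) F AB = #|{: cfg 'I_n.+1}|%:R * Ex F.
  by rewrite /Ex; field.
have s3 : Ex F = \prod_(L <- Ls n k) Ex (LQ R (false, false) L).
  exact: Ex_prod_ladders (uniq_Ls hn h16 h4).
have s4 : \prod_(L <- Ls n k) Ex (LQ R (false, false) L) <=
          \prod_(L <- Ls n k) rho ^+ size (ladpos L).
  rewrite big_seq [X in _ <= X]big_seq; apply: ler_prod => L LLs; apply/andP; split.
    by apply: Ex_ge0 => AB; exact: LQ_ge0.
  have UL : uniq (ladpos L).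
    apply: (uniq_flatten_in (uniq_Ls hn h16 h4)).
    by apply/mapP; exists L.
  apply: le_trans (LQ_bound _ _ UL) _.
  rewrite size_ladpos; apply: Bnd_le.
  case/mapP: LLs => r rc ->; case/canlP: rc => rk _.
  by rewrite /lad size_map size_iota (jj_ge4 hn h16 h4 rk) (jj_le16 hn h16 h4).
have s5 : rho ^+ size (flatten [seq ladpos L | L <- Ls n k]) <= rho ^+ (n - 32).
  by apply: ler_wiXn2l; [rewrite /rho; lra | rewrite /rho; lra | exact: size_Ls].
have cg0 : 0 <= (#|{: cfg 'I_n.+1}|%:R : R) by rewrite ler0n.
apply: le_trans s1 _; rewrite s2 s3.
apply: le_trans (_ : _ <= #|{: cfg 'I_n.+1}|%:R * rho ^+ (n - 32)) _.
  apply: ler_wpM2l => //; apply: le_trans s4 _; rewrite prod_rho; exact: s5.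
by rewrite card_cfgI; apply: final_num.
Qed.

End Final.

Theorem mainTheorem15 (R : realType) :
  exists (eps C : R), 0 < eps /\ 0 < C /\
    forall (n k : nat), (0 < n)%N -> (n <= 16 * k)%N -> (4 * k <= n)%N ->
      g R k n <= C * (2 - eps) ^+ n.
Proof.
exists (1 / 2000), (2 ^+ 70); split; first by lra.
split; first by rewrite exprn_gt0.
move=> n k hn h16 h4.
rewrite (_ : 2 - 1 / 2000 = 3999 / 2000 :> R); last by lra.
exact: g_bound.
Qed.
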